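(* Let $(G,\cdot)$ be a loop and $(H,\cdot)$ a non-trivial subloop. Then $(xs\cdot z)s=x(sz\cdot s)$ holds for all $x,z\in G$ and $s\in H$ if and only if $(R_s^{-1},L_sR_s,R_s)\in \mathrm{S_{1st}AUT}(G_H)$ for every $s\in H$.
   Context: Juxtaposition binds more tightly than $\cdot$. Maps are written on the right and composed left to right; $xR_s=x\cdot s$, $xL_s=s\cdot x$. $SSYM(G_H)$ is the set of bijections $A$ of $G$ with $HA=H$. $\mathrm{S_{1st}AUT}(G_H)$ is the set of triples $(U,V,W)$ with $U,V,W\in SSYM(G_H)$ and $xU\cdot yV=(x\cdot y)W$ for all $x,y\in G$. *)

(* Defs.v *)
From Stdlib Require Import ClassicalEpsilon.

Record Loop := MkLoop {
  carrier :> Type;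
  lmul : carrier -> carrier -> carrier;
  lone : carrier;
  lmul1l : forall x, lmul lone x = x;
  lmul1r : forall x, lmul x lone = x;
  lsolve_l : forall a b, exists! x, lmul a x = b;
  lsolve_r : forall a b, exists! y, lmul y a = b
}.

Section LoopDefs.
Variable G : Loop.
Local Notation "x * y" := (lmul G x y).

Lemma ex_of_uniq {T} (P : T -> Prop) : (exists! x, P x) -> exists x, P x.
Proof. intros [x [Hx _]]; exists x; exact Hx. Qed.

Definition rdiv (b a : G) : G :=
  proj1_sig (constructive_indefinite_description _
    (ex_of_uniq _ (lsolve_r G a b))).
Definition ldiv (a b : G) : G :=
  proj1_sig (constructive_indefinite_description _
    (ex_of_uniq _ (lsolve_l G a b))).

Definition Rmap (s : G) : G -> G := fun x => x * s.
Definition Lmap (s : G) : G -> G := fun x => s * x.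
Definition Rinv (s : G) : G -> G := fun x => rdiv x s.
(* maps written on the right, composed left to right: x (A B) = (x A) B *)
Definition compLR (A B : G -> G) : G -> G := fun x => B (A x).

Definition is_subloop (H : G -> Prop) : Prop :=
  H (lone G) /\
  (forall a b, H a -> H b -> H (a * b)) /\
  (forall a b, H a -> H b -> H (ldiv a b)) /\
  (forall a b, H a -> H b -> H (rdiv b a)).

Definition nontrivial (H : G -> Prop) : Prop := exists h, H h /\ h <> lone G.

Definition bijective_map (A : G -> G) : Prop :=
  (forall x y, A x = A y -> x = y) /\ (forall y, exists x, A x = y).

Definition SSYM (H : G -> Prop) (A : G -> G) : Prop :=
  bijective_map A /\ (forall y, H y <-> exists x, H x /\ A x = y).

Definition S1stAUT (H : G -> Prop) (U V W : G -> G) : Prop :=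
  SSYM H U /\ SSYM H V /\ SSYM H W /\
  (forall x y, U x * V y = W (x * y)).

End LoopDefs.

(* Main.v *)
Require Import Defs.
From Stdlib Require Import ClassicalEpsilon.

Section Aux.
Variable G : Loop.
Local Notation "x * y" := (lmul G x y).

Lemma rdiv_spec (b a : G) : rdiv G b a * a = b.
Proof. unfold rdiv. destruct constructive_indefinite_description; simpl; auto. Qed.
Lemma ldiv_spec (a b : G) : a * ldiv G a b = b.
Proof. unfold ldiv. destruct constructive_indefinite_description; simpl; auto. Qed.
Lemma rcancel (a y z : G) : y * a = z * a -> y = z.
Proof. intros E. destruct (lsolve_r G a (z * a)) as [w [_ U]].
  rewrite <- (U y E). apply U; reflexivity. Qed.
Lemma lcancel (a y z : G) : a * y = a * z -> y = z.
Proof. intros E. destruct (lsolve_l G a (a * z)) as [w [_ U]].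
  rewrite <- (U y E). apply U; reflexivity. Qed.
Lemma rdiv_mul (x s : G) : rdiv G (x * s) s = x.
Proof. apply (rcancel s). apply rdiv_spec. Qed.
End Aux.

Theorem theorem3p4 (G : Loop) (H : G -> Prop)
  (HH : is_subloop G H) (Hnt : nontrivial G H) :
  (forall x z s : G, H s ->
     lmul G (lmul G (lmul G x s) z) s = lmul G x (lmul G (lmul G s z) s))
  <->
  (forall s : G, H s ->
     S1stAUT G H (Rinv G s) (compLR G (Lmap G s) (Rmap G s)) (Rmap G s)).
Proof.
  destruct HH as [H1 [Hm [Hl Hr]]].
  unfold S1stAUT, SSYM, bijective_map, Rinv, compLR, Lmap, Rmap.
  split.
  - intros Id s Hs. split; [|split; [|split]].
    + split; [split|].
      * intros x y E. rewrite <- (rdiv_spec G x s), <- (rdiv_spec G y s), E; reflexivity.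
      * intros y. exists (lmul G y s). apply rdiv_mul.
      * intros y; split.
        -- intros Hy. exists (lmul G y s). split; auto. apply rdiv_mul.
        -- intros [x [Hx E]]. subst. auto.
    + split; [split|].
      * intros x y E. apply (lcancel G s). apply (rcancel G s). exact E.
      * intros y. exists (ldiv G s (rdiv G y s)). rewrite ldiv_spec. apply rdiv_spec.
      * intros y; split.
        -- intros Hy. exists (ldiv G s (rdiv G y s)). split; auto.
           rewrite ldiv_spec. apply rdiv_spec.
        -- intros [x [Hx E]]. subst. auto.
    + split; [split|].
      * intros x y E. apply (rcancel G s). exact E.
      * intros y. exists (rdiv G y s). apply rdiv_spec.
      * intros y; split.
        -- intros Hy. exists (rdiv G y s). split; auto. apply rdiv_spec.
        -- intros [x [Hx E]]. subst. auto.
    + intros x y. rewrite <- (Id (rdiv G x s) y s Hs). rewrite rdiv_spec. reflexivity.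
  - intros A x z s Hs. destruct (A s Hs) as [_ [_ [_ E]]].
    rewrite <- E. rewrite rdiv_mul. reflexivity.
Qed.
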